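(* Consider the autonomous system $\ddot q^{a}=-\Gamma^{a}_{bc}(q)\dot q^{b}\dot q^{c}-Q^{a}(q)$ on a (pseudo-)Riemannian manifold with metric $\gamma_{ab}$. Let $m\ge 3$ and $n\ge 1$ be integers. Suppose we are given: a constant $s$; a smooth function $G(q)$; an $m$th-order Killing tensor $C_{(0)i_1\dots i_m}(q)$; and, for each $k=0,1,\dots,n$ and $r=1,\dots,m-1$, totally symmetric $r$-rank tensor fields $L_{(k)i_1\dots i_r}(q)$, such that: (i) for $k=0,\dots,n-1$, the tensor $L_{(k)(i_1\dots i_{m-1};i_m)}$ is an $m$th-order Killing tensor, and $L_{(n)i_1\dots i_{m-1}}$ is an $(m-1)$th-order Killing tensor; (ii) $L_{(n)i_1}Q^{i_1}=s$; (iii) the following hold: \begin{align*} &L_{(n)(i_1\dots i_{m-2};i_{m-1})}=-\tfrac{m}{n}L_{(n-1)(i_1\dots i_{m-1};i_m)}Q^{i_m},\\ &L_{(k-1)(i_1\dots i_{m-2};i_{m-1})}=-\tfrac{m}{k-1}L_{(k-2)(i_1\dots i_{m-1};i_m)}Q^{i_m}-k\,L_{(k)i_1\dots i_{m-1}},\quad k=2,\dots,n,\\ &L_{(0)(i_1\dots i_{m-2};i_{m-1})}=m\,C_{(0)i_1\dots i_{m-1}i_m}Q^{i_m}-L_{(1)i_1\dots i_{m-1}},\\ &L_{(n)(i_1\dots i_{r-1};i_r)}=(r+1)L_{(n)i_1\dots i_r i_{r+1}}Q^{i_{r+1}},\quad r=2,\dots,m-2,\\ &L_{(k-1)(i_1\dots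 i_{r-1};i_r)}=(r+1)L_{(k-1)i_1\dots i_r i_{r+1}}Q^{i_{r+1}}-k\,L_{(k)i_1\dots i_r},\quad k=1,\dots,n,\ r=2,\dots,m-2,\\ &\big(L_{(n-1)c}Q^{c}\big)_{,i_1}=2n\,L_{(n)i_1i_2}Q^{i_2},\\ &\big(L_{(k-2)c}Q^{c}\big)_{,i_1}=2(k-1)L_{(k-1)i_1i_2}Q^{i_2}-k(k-1)L_{(k)i_1},\quad k=2,\dots,n,\\ &G_{,i_1}=2L_{(0)i_1i_2}Q^{i_2}-L_{(1)i_1}. \end{align*} Then \begin{align*} I^{(m)}_n=&\Big(C_{(0)i_1\dots i_m}-\sum_{k=1}^{n}\frac{t^{k}}{k}L_{(k-1)(i_1\dots i_{m-1};i_m)}\Big)\dot q^{i_1}\cdots\dot q^{i_m}+\sum_{r=1}^{m-1}\sum_{k=0}^{n}t^{k}L_{(k)i_1\dots i_r}\dot q^{i_1}\cdots\dot q^{i_r}\\ &+s\frac{t^{n+1}}{n+1}+\sum_{k=1}^{n}\frac{t^{k}}{k}L_{(k-1)c}Q^{c}+G(q) \end{align*} is a first integral of the system (constant along every solution).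
   Context: Indices are raised and lowered with $\gamma_{ab}$; Einstein summation convention; $\Gamma^a_{bc}$ are the Christoffel symbols of $\gamma_{ab}$; a comma denotes a partial derivative, a semicolon the Levi-Civita covariant derivative of $\gamma_{ab}$, and round brackets around indices denote total symmetrization (normalized). A totally symmetric tensor $K_{i_1\dots i_p}$ is a $p$th-order Killing tensor if $K_{(i_1\dots i_p;i_{p+1})}=0$. When $m=3$ the conditions with $r=2,\dots,m-2$ are vacuous; when $n=1$ the conditions with $k=2,\dots,n$ are vacuous. A first integral is a function of $(t,q,\dot q)$ constant along all solutions. *)

(* Defs.v *)
(* R : realType, points of the coordinate chart are row vectors 'rV[R]_N. *)
From HB Require Import structures.
From mathcomp Require Import all_boot all_order all_algebra all_fingroup.
From mathcomp Require Import all_classical all_reals all_analysis.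
Set Implicit Arguments. Unset Strict Implicit. Unset Printing Implicit Defensive.
Import Order.TTheory GRing.Theory Num.Theory.
Import numFieldNormedType.Exports.
Local Open Scope classical_set_scope.
Local Open Scope ring_scope.

Section Geometry.
Variables (R : realType) (N : nat).
Local Notation pt := 'rV[R]_N.

Definition pd (f : pt -> R) (i : 'I_N) : pt -> R :=
  fun x => derive f x (delta_mx ord0 i).

Fixpoint Ck (k : nat) (U : set pt) (f : pt -> R) : Prop :=
  match k with
  | 0 => forall x, U x -> {for x, continuous f}
  | k'.+1 => (forall x, U x -> differentiable f x) /\ (forall i, Ck k' U (pd f i))
  end.
Definition smooth (U : set pt) (f : pt -> R) : Prop := forall k, Ck k U f.

Definition gmat (gamma : 'I_N -> 'I_N -> pt -> R) (x : pt) : 'M[R]_N :=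
  \matrix_(a, b) gamma a b x.
Definition ginv (gamma : 'I_N -> 'I_N -> pt -> R) (x : pt) : 'M[R]_N :=
  invmx (gmat gamma x).
Definition Christoffel (gamma : 'I_N -> 'I_N -> pt -> R) (a b c : 'I_N) (x : pt) : R :=
  2^-1 * \sum_(d < N) ginv gamma x a d *
     (pd (gamma d c) b x + pd (gamma d b) c x - pd (gamma b c) d x).

(* A covariant tensor field: components indexed by a list of indices
   (the rank is the length of the list). *)
Definition tensor := seq 'I_N -> pt -> R.

Definition covD (gamma : 'I_N -> 'I_N -> pt -> R) (T : tensor) (ix : seq 'I_N) (j : 'I_N)
  (x : pt) : R :=
  pd (T ix) j x -
  \sum_(p < size ix) \sum_(c < N)
     Christoffel gamma c j (nth j ix p) x * T (set_nth c ix p c) x.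

(* nabla T (i_1 ... i_r j) := T_{i_1 ... i_r ; j}  (last index = derivative index) *)
Definition nabla (gamma : 'I_N -> 'I_N -> pt -> R) (T : tensor) : tensor :=
  fun js x => match js with
              | [::] => 0
              | j0 :: t => covD gamma T (belast j0 t) (last j0 t) x
              end.

Definition sym (T : tensor) : tensor :=
  fun js x => ((size js)`!%:R)^-1 *
    \sum_(s : 'S_(size js)) T [seq tnth (in_tuple js) (s p) | p <- enum 'I_(size js)] x.

Definition totally_symmetric (U : set pt) (r : nat) (T : tensor) : Prop :=
  forall x, U x -> forall (js : seq 'I_N) (s : 'S_(size js)), size js = r ->
    T [seq tnth (in_tuple js) (s p) | p <- enum 'I_(size js)] x = T js x.

Definition Killing (gamma : 'I_N -> 'I_N -> pt -> R) (U : set pt) (p : nat) (K : tensor)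
  : Prop :=
  totally_symmetric U p K /\
  forall x, U x -> forall js : seq 'I_N, size js = p.+1 -> sym (nabla gamma K) js x = 0.

Definition is_solution (gamma : 'I_N -> 'I_N -> pt -> R) (Q : 'I_N -> pt -> R)
  (U : set pt) (ta tb : R) (q : R -> pt) : Prop :=
  forall t, ta < t < tb ->
    [/\ U (q t), derivable q t 1, derivable (fun u => 'D_1 q u) t 1 &
      forall a : 'I_N,
        ('D_1 (fun u => 'D_1 q u) t) ord0 a =
          - (\sum_(b < N) \sum_(c < N)
               Christoffel gamma a b c (q t) * ('D_1 q t) ord0 b * ('D_1 q t) ord0 c)
          - Q a (q t)].

Definition first_integral (gamma : 'I_N -> 'I_N -> pt -> R) (Q : 'I_N -> pt -> R)
  (U : set pt) (F : R -> pt -> pt -> R) : Prop :=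
  forall (ta tb : R) (q : R -> pt), is_solution gamma Q U ta tb q ->
    forall t1 t2, ta < t1 < tb -> ta < t2 < tb ->
      F t1 (q t1) ('D_1 q t1) = F t2 (q t2) ('D_1 q t2).

Definition contrQ (T : tensor) (Q : 'I_N -> pt -> R) (ix : seq 'I_N) (x : pt) : R :=
  \sum_(c < N) T (rcons ix c) x * Q c x.

Definition fullcontr (r : nat) (T : tensor) (x v : pt) : R :=
  \sum_(ix : r.-tuple 'I_N) T ix x * \prod_(i <- ix) v ord0 i.

End Geometry.

(* Main.v *)
Require Import Defs.
From HB Require Import structures.
From mathcomp Require Import all_boot all_order all_algebra all_fingroup.
From mathcomp Require Import all_classical all_reals all_analysis.
From mathcomp Require Import ring lra zify.
Import Order.TTheory GRing.Theory Num.Theory.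
Import numFieldNormedType.Exports.
Local Open Scope classical_set_scope.
Local Open Scope ring_scope.
Set Implicit Arguments. Unset Strict Implicit. Unset Printing Implicit Defensive.
Section Comb.
Variables (R : realType) (N : nat).

Lemma sum_rcons_t r (F : r.+1.-tuple 'I_N -> R) :
  \sum_(js : r.+1.-tuple 'I_N) F js = \sum_(ix : r.-tuple 'I_N) \sum_(j < N) F [tuple of rcons ix j].
Proof.
rewrite pair_big /=.
pose h (p : r.-tuple 'I_N * 'I_N) : r.+1.-tuple 'I_N := [tuple of rcons p.1 p.2].
pose g (js : r.+1.-tuple 'I_N) : r.-tuple 'I_N * 'I_N :=
  ([tuple of belast (thead js) (behead js)], last (thead js) (behead js)).
have eta_val (js : r.+1.-tuple 'I_N) : tval js = thead js :: behead js.
  by case: js => [[|i s] Hs] //=; rewrite /thead (tnth_nth i).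
have hg : cancel g h.
  by move=> js; apply: val_inj => /=; rewrite -lastI eta_val.
have gh : cancel h g.
  move=> [ix j].
  have E : rcons (belast (thead (h (ix, j))) (behead (h (ix, j))))
                 (last (thead (h (ix, j))) (behead (h (ix, j)))) = rcons ix j.
    by rewrite -lastI -eta_val.
  case/rcons_inj: E => E1 E2.
  by rewrite /g; congr pair => //; apply: val_inj.
rewrite (reindex h) /=; last by exists g => ? _.
by apply: eq_bigr.
Qed.

Lemma sum_rcons r (F : seq 'I_N -> R) :
  \sum_(js : r.+1.-tuple 'I_N) F js = \sum_(ix : r.-tuple 'I_N) \sum_(j < N) F (rcons ix j).
Proof. exact: (sum_rcons_t (fun js => F js)). Qed.

End Comb.
Section Perm.
Variables (R : realType) (N : nat).
Local Notation pt := 'rV[R]_N.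

Definition ptup r (ix : r.-tuple 'I_N) (s : 'S_r) : r.-tuple 'I_N :=
  [tuple tnth ix (s q) | q < r].

Lemma ptupK r (s : 'S_r) : cancel (fun ix : r.-tuple 'I_N => ptup ix s) (fun ix => ptup ix s^-1).
Proof. by move=> ix; apply: eq_from_tnth => q; rewrite !tnth_mktuple permKV. Qed.

Lemma ptupM r (ix : r.-tuple 'I_N) (s t : 'S_r) : ptup (ptup ix s) t = ptup ix (t * s).
Proof. by apply: eq_from_tnth => q; rewrite !tnth_mktuple permM. Qed.

Lemma val_ptup r (ix : r.-tuple 'I_N) (s : 'S_r) :
  tval (ptup ix s) = [seq tnth ix (s p) | p <- enum 'I_r].
Proof. by []. Qed.

Definition mono r (v : pt) (ix : r.-tuple 'I_N) : R := \prod_(i <- ix) v ord0 i.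

Lemma monoE r (v : pt) (ix : r.-tuple 'I_N) : mono v ix = \prod_(q < r) v ord0 (tnth ix q).
Proof. by rewrite /mono big_tuple. Qed.

Lemma mono_ptup r (v : pt) (ix : r.-tuple 'I_N) s : mono v (ptup ix s) = mono v ix.
Proof.
rewrite !monoE; under eq_bigr do rewrite tnth_mktuple.
by rewrite [RHS](reindex_inj (@perm_inj _ s)).
Qed.

Lemma sym_tuple (T : tensor R N) r (ix : r.-tuple 'I_N) x :
  sym T ix x = (r`!%:R)^-1 * \sum_(s : 'S_r) T (ptup ix s) x.
Proof.
case: ix => s0 Hs; move/eqP: (Hs) => e; subst r.
rewrite /sym; congr (_ * _); apply: eq_bigr => s _.
by rewrite val_ptup; congr (T _ x); apply: eq_map => p /=; congr tnth; apply: val_inj.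
Qed.

Definition tsym (T : tensor R N) r x := forall (ix : r.-tuple 'I_N) (s : 'S_r), T (ptup ix s) x = T ix x.

Lemma tsym_sym T r x : tsym (sym T) r x.
Proof.
move=> ix s; rewrite !sym_tuple; congr (_ * _).
under eq_bigr do rewrite ptupM.
by rewrite [RHS](reindex_inj (mulIg s)).
Qed.

Lemma tsym_totsym (U : set pt) T r x : totally_symmetric U r T -> U x -> tsym T r x.
Proof.
move=> H Ux ix s; have := H x Ux ix.
case: ix s => s0 Hs /=; move/eqP: (Hs) => e; subst r => s.
move/(_ s erefl) <-; rewrite val_ptup; congr (T _ x); apply: eq_map => p /=; congr tnth; by apply: val_inj.
Qed.

Lemma fullcontr_sym (T : tensor R N) r (x v : pt) : fullcontr r (sym T) x v = fullcontr r T x v.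
Proof.
rewrite /fullcontr.
have E (s : 'S_r) : \sum_(ix : r.-tuple 'I_N) T (ptup ix s) x * mono v ix
    = \sum_(ix : r.-tuple 'I_N) T ix x * mono v ix.
  under eq_bigr do rewrite -(mono_ptup v _ s).
  by rewrite [RHS](reindex_inj (can_inj (ptupK s))).
transitivity (\sum_(ix : r.-tuple 'I_N) (r`!%:R)^-1 * \sum_(s : 'S_r) (T (ptup ix s) x * mono v ix)).
  by apply: eq_bigr => ix _; rewrite sym_tuple -mulrA mulr_suml.
rewrite -mulr_sumr exchange_big /= (eq_bigr _ (fun s _ => E s)) sumr_const card_Sn.
by rewrite mulrnAr -[in LHS]mulr_natl mulrA mulfV ?mul1r // pnatr_eq0 -lt0n fact_gt0.
Qed.
End Perm.
Section Calc.
Variable (R : realType).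
Implicit Types (f g : R -> R) (t df dg : R).

Lemma isd_add f g t df dg : is_derive t 1 f df -> is_derive t 1 g dg ->
  is_derive t 1 (fun u => f u + g u) (df + dg).
Proof. move=> Hf Hg; exact: is_deriveD. Qed.
Lemma isd_sub f g t df dg : is_derive t 1 f df -> is_derive t 1 g dg ->
  is_derive t 1 (fun u => f u - g u) (df - dg).
Proof. move=> Hf Hg; exact: is_deriveB. Qed.
Lemma isd_mul f g t df dg : is_derive t 1 f df -> is_derive t 1 g dg ->
  is_derive t 1 (fun u => f u * g u) (df * g t + f t * dg).
Proof.
move=> Hf Hg; apply: (is_derive_eq (is_deriveM Hf Hg)).
by rewrite /GRing.scale /= addrC mulrC.
Qed.
Lemma isd_cst t (c : R) : is_derive t 1 (fun _ => c) 0.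
Proof. exact: is_derive_cst. Qed.
Lemma isd_id t : is_derive t 1 (fun u : R => u) 1.
Proof. exact: is_derive_id. Qed.

Lemma isd_sum (I : Type) (s : seq I) (P : pred I) (F : I -> R -> R) (dF : I -> R) t :
  (forall i, P i -> is_derive t 1 (F i) (dF i)) ->
  is_derive t 1 (fun u => \sum_(i <- s | P i) F i u) (\sum_(i <- s | P i) dF i).
Proof.
move=> H; elim: s => [|a s IH].
  have -> : (fun u => \sum_(i <- [::] | P i) F i u) = (fun _ => 0) by apply/funext => u; rewrite big_nil.
  by rewrite big_nil; exact: isd_cst.
case Pa: (P a).
  have -> : (fun u => \sum_(i <- a :: s | P i) F i u) = (fun u => F a u + \sum_(i <- s | P i) F i u).
    by apply/funext => u; rewrite big_cons Pa.
  by rewrite big_cons Pa; apply: isd_add => //; exact: H.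
have -> : (fun u => \sum_(i <- a :: s | P i) F i u) = (fun u => \sum_(i <- s | P i) F i u).
  by apply/funext => u; rewrite big_cons Pa.
by rewrite big_cons Pa.
Qed.

Lemma isd_prod n (h : 'I_n -> R -> R) (d : 'I_n -> R) t :
  (forall p, is_derive t 1 (h p) (d p)) ->
  is_derive t 1 (fun u => \prod_(p < n) h p u) (\sum_(p < n) d p * \prod_(q < n | q != p) h q t).
Proof.
elim: n h d => [|n IH] h d H.
  have -> : (fun u => \prod_(p < 0) h p u) = (fun _ => 1) by apply/funext => u; rewrite big_ord0.
  by rewrite big_ord0; exact: isd_cst.
have -> : (fun u => \prod_(p < n.+1) h p u) = (fun u => h ord0 u * \prod_(p < n) h (lift ord0 p) u).
  by apply/funext => u; rewrite big_ord_recl.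
apply: (is_derive_eq (isd_mul (H ord0) (IH (fun p => h (lift ord0 p)) (fun p => d (lift ord0 p)) (fun p => H _)))).
rewrite big_ord_recl; congr (_ + _).
  by rewrite [in RHS]big_mkcond big_ord_recl /= mul1r.
rewrite mulr_sumr; apply: eq_bigr => p _.
rewrite [in RHS]big_mkcond big_ord_recl /= mulrCA; congr (_ * (_ * _)).
rewrite big_mkcond; apply: eq_bigr => q _.
by rewrite (inj_eq (@lift_inj _ ord0)).
Qed.

Lemma isd_pow t k : is_derive t 1 (fun u : R => u ^+ k) (k%:R * t ^+ k.-1).
Proof.
elim: k => [|k IH].
  have -> : (fun u : R => u ^+ 0) = (fun _ => 1) by apply/funext => u; rewrite expr0.
  by rewrite mul0r; exact: isd_cst.
have -> : (fun u : R => u ^+ k.+1) = (fun u => u * u ^+ k) by apply/funext => u; rewrite exprS.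
apply: (is_derive_eq (isd_mul (isd_id t) IH)).
case: k {IH} => [|k]; first by rewrite !expr0 mul0r mulr0 !mul1r addr0.
by rewrite exprS; ring.
Qed.

End Calc.

Section Chain.
Variables (R : realType) (N : nat).
Local Notation pt := 'rV[R]_N.

Lemma isd_comp (f : pt -> R) (q : R -> pt) t :
  derivable q t 1 -> differentiable f (q t) ->
  is_derive t 1 (fun u => f (q u)) (\sum_(i < N) ('D_1 q t) ord0 i * pd f i (q t)).
Proof.
move=> hq df.
have dq : differentiable q t by apply/derivable1_diffP.
have dfq : differentiable (f \o q) t := differentiable_comp dq df.
have -> : (fun u => f (q u)) = f \o q by [].
apply: DeriveDef; first exact: diff_derivable.
rewrite (deriveE _ dfq) (diff_comp dq df) /= -(deriveE _ dq).
rewrite [X in 'd f (q t) X]row_sum_delta linear_sum; apply: eq_bigr => i _.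
by rewrite linearZ /= /pd (deriveE _ df).
Qed.

Lemma isd_coord (V : R -> pt) t i : derivable V t 1 ->
  is_derive t 1 (fun u => V u ord0 i) (('D_1 V t) ord0 i).
Proof.
move=> hV; apply: DeriveDef; first by move/derivable_mxP: hV; apply.
by rewrite (derive_mx hV) mxE.
Qed.
End Chain.
Section Tens.
Variables (R : realType) (N : nat).
Local Notation pt := 'rV[R]_N.

Definition mex r (v : pt) (ix : r.-tuple 'I_N) (p : 'I_r) : R :=
  \prod_(q < r | q != p) v ord0 (tnth ix q).

Definition upd r (ix : r.-tuple 'I_N) (p : 'I_r) (c : 'I_N) : r.-tuple 'I_N :=
  [tuple (if q == p then c else tnth ix q) | q < r].

Lemma mono_mex r (v : pt) (ix : r.-tuple 'I_N) p : mono v ix = v ord0 (tnth ix p) * mex v ix p.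
Proof. by rewrite monoE (bigD1 p). Qed.

Lemma mex_upd r (v : pt) (ix : r.-tuple 'I_N) p c : mex v (upd ix p c) p = mex v ix p.
Proof. by apply: eq_bigr => q /negPf qp; rewrite tnth_mktuple qp. Qed.

Lemma tnth_upd r (ix : r.-tuple 'I_N) p c : tnth (upd ix p c) p = c.
Proof. by rewrite tnth_mktuple eqxx. Qed.

Lemma upd_upd r (ix : r.-tuple 'I_N) p c : upd (upd ix p c) p (tnth ix p) = ix.
Proof.
apply: eq_from_tnth => q; rewrite !tnth_mktuple.
by case: eqP => [->|].
Qed.

Lemma val_upd r (ix : r.-tuple 'I_N) (p : 'I_r) c : set_nth c ix p c = upd ix p c.
Proof.
apply: (@eq_from_nth _ c).
  by rewrite size_set_nth !size_tuple; have := ltn_ord p; lia.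
have Hs : size (set_nth c ix p c) = r by rewrite size_set_nth size_tuple; have := ltn_ord p; lia.
rewrite Hs => i Hi.
rewrite nth_set_nth /= -[nth c (tval (upd ix p c)) i]/(nth c (upd ix p c) i).
rewrite -(tnth_nth c (upd ix p c) (Ordinal Hi)) tnth_mktuple (tnth_nth c).
by case: ifP => //.
Qed.

Lemma covD_tuple (gamma : 'I_N -> 'I_N -> pt -> R) (T : tensor R N) r (ix : r.-tuple 'I_N) j x :
  covD gamma T ix j x = pd (T ix) j x -
   \sum_(p < r) \sum_(c < N) Christoffel gamma c j (tnth ix p) x * T (upd ix p c) x.
Proof.
rewrite /covD; congr (_ - _).
have E : forall F : nat -> R, \sum_(p < size ix) F p = \sum_(p < r) F p.
  by move=> F; rewrite size_tuple.
rewrite (E (fun p => \sum_(c < N) Christoffel gamma c j (nth j ix p) x * T (set_nth c ix p c) x)).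
apply: eq_bigr => p _; apply: eq_bigr => c _.
by rewrite val_upd (tnth_nth j).
Qed.

Lemma nabla_rcons (gamma : 'I_N -> 'I_N -> pt -> R) (T : tensor R N) (s : seq 'I_N) j x :
  nabla gamma T (rcons s j) x = covD gamma T s j x.
Proof. by case: s => [|i s] //=; rewrite belast_rcons last_rcons. Qed.

Lemma mono_rcons r (v : pt) (ix : r.-tuple 'I_N) j :
  \prod_(i <- rcons ix j) v ord0 i = mono v ix * v ord0 j.
Proof. by rewrite big_rcons. Qed.

End Tens.
Section Nab.
Variables (R : realType) (N : nat).
Local Notation pt := 'rV[R]_N.
Variable (gamma : 'I_N -> 'I_N -> pt -> R).
Local Notation Gam := (Christoffel gamma).

Lemma reindex_upd r (p : 'I_r) (F : r.-tuple 'I_N -> 'I_N -> R) :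
  \sum_(ix : r.-tuple 'I_N) \sum_(c < N) F (upd ix p c) (tnth ix p)
  = \sum_(ix : r.-tuple 'I_N) \sum_(b < N) F ix b.
Proof.
rewrite !pair_big /=.
pose phi (z : r.-tuple 'I_N * 'I_N) := (upd z.1 p z.2, tnth z.1 p).
have phiK : cancel phi phi.
  by move=> [ix c]; rewrite /phi /= upd_upd tnth_upd.
by rewrite [RHS](reindex_inj (can_inj phiK)).
Qed.

Lemma Kgam (T : tensor R N) r x (v : pt) :
  \sum_(ix : r.-tuple 'I_N) \sum_(j < N)
     (\sum_(p < r) \sum_(c < N) Gam c j (tnth ix p) x * T (upd ix p c) x) * (mono v ix * v ord0 j)
  = \sum_(ix : r.-tuple 'I_N) T ix x * \sum_(p < r)
     (\sum_(b < N) \sum_(c < N) Gam (tnth ix p) b c x * v ord0 b * v ord0 c) * mex v ix p.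
Proof.
transitivity (\sum_(p < r) \sum_(ix : r.-tuple 'I_N) \sum_(c < N) \sum_(j < N)
   Gam c j (tnth ix p) x * T (upd ix p c) x * (v ord0 (tnth ix p) * mex v (upd ix p c) p) * v ord0 j).
  rewrite [RHS]exchange_big /=; apply: eq_bigr => ix _.
  under eq_bigr do rewrite mulr_suml.
  rewrite exchange_big /=; apply: eq_bigr => p _.
  under eq_bigr do rewrite mulr_suml.
  rewrite exchange_big /=; apply: eq_bigr => c _; apply: eq_bigr => j _.
  rewrite mex_upd -mono_mex; ring.
transitivity (\sum_(p < r) \sum_(ix : r.-tuple 'I_N) \sum_(b < N) \sum_(j < N)
   Gam (tnth ix p) j b x * T ix x * (v ord0 b * mex v ix p) * v ord0 j).
  apply: eq_bigr => p _.
  rewrite -(reindex_upd p (fun jx b => \sum_(j < N) Gam (tnth jx p) j b x * T jx x * (v ord0 b * mex v jx p) * v ord0 j)).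
  by apply: eq_bigr => ix _; apply: eq_bigr => c _; rewrite tnth_upd.
rewrite exchange_big /=; apply: eq_bigr => ix _.
rewrite mulr_sumr; apply: eq_bigr => p _.
rewrite exchange_big mulr_suml mulr_sumr; apply: eq_bigr => b _.
rewrite mulr_suml mulr_sumr; apply: eq_bigr => c _; ring.
Qed.

Lemma Dval_nabla (Q : 'I_N -> pt -> R) (T : tensor R N) r x (v : pt) :
  \sum_(ix : r.-tuple 'I_N) ((\sum_(i < N) v ord0 i * pd (T ix) i x) * mono v ix
     + T ix x * \sum_(p < r) (- (\sum_(b < N) \sum_(c < N) Gam (tnth ix p) b c x * v ord0 b * v ord0 c)
                               - Q (tnth ix p) x) * mex v ix p)
  = fullcontr r.+1 (nabla gamma T) x v
    - \sum_(ix : r.-tuple 'I_N) T ix x * \sum_(p < r) Q (tnth ix p) x * mex v ix p.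
Proof.
rewrite /fullcontr (sum_rcons r (fun s => nabla gamma T s x * \prod_(i <- s) v ord0 i)).
have H1 : forall ix : r.-tuple 'I_N,
   \sum_(j < N) nabla gamma T (rcons ix j) x * \prod_(i <- rcons ix j) v ord0 i
   = (\sum_(i < N) v ord0 i * pd (T ix) i x) * mono v ix
     - \sum_(j < N) (\sum_(p < r) \sum_(c < N) Gam c j (tnth ix p) x * T (upd ix p c) x) * (mono v ix * v ord0 j).
  move=> ix; rewrite mulr_suml -sumrB; apply: eq_bigr => j _.
  rewrite nabla_rcons mono_rcons covD_tuple; ring.
rewrite (eq_bigr _ (fun ix _ => H1 ix)) sumrB Kgam -!sumrB.
apply: eq_bigr => ix _.
have -> : \sum_(p < r) (- (\sum_(b < N) \sum_(c < N) Gam (tnth ix p) b c x * v ord0 b * v ord0 c)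
                               - Q (tnth ix p) x) * mex v ix p
   = - (\sum_(p < r) (\sum_(b < N) \sum_(c < N) Gam (tnth ix p) b c x * v ord0 b * v ord0 c) * mex v ix p)
     - \sum_(p < r) Q (tnth ix p) x * mex v ix p.
  by rewrite -sumrN -sumrB; apply: eq_bigr => p _; ring.
ring.
Qed.
End Nab.
Section QT.
Variables (R : realType) (N : nat).
Local Notation pt := 'rV[R]_N.

Lemma tnth_rcons_max r (ix : r.-tuple 'I_N) c : tnth [tuple of rcons ix c] ord_max = c.
Proof. by rewrite (tnth_nth c) /= nth_rcons size_tuple ltnn eqxx. Qed.

Lemma tnth_rcons_widen r (ix : r.-tuple 'I_N) c (q : 'I_r) :
  tnth [tuple of rcons ix c] (widen_ord (leqnSn r) q) = tnth ix q.
Proof. by rewrite (tnth_nth c) /= nth_rcons size_tuple ltn_ord (tnth_nth c). Qed.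

Lemma mex_rcons_max r (v : pt) (ix : r.-tuple 'I_N) c : mex v [tuple of rcons ix c] ord_max = mono v ix.
Proof.
rewrite /mex big_mkcond big_ord_recr /= eqxx mulr1 monoE.
apply: eq_bigr => q _; rewrite tnth_rcons_widen.
by rewrite ifT // neq_ltn /= ltn_ord.
Qed.

Lemma Qterm (Q : 'I_N -> pt -> R) (T : tensor R N) r x (v : pt) :
  tsym T r.+1 x ->
  \sum_(ix : r.+1.-tuple 'I_N) T ix x * \sum_(p < r.+1) Q (tnth ix p) x * mex v ix p
  = r.+1%:R * fullcontr r (contrQ T Q) x v.
Proof.
move=> Hs.
have E : forall p : 'I_r.+1,
  \sum_(ix : r.+1.-tuple 'I_N) T ix x * (Q (tnth ix p) x * mex v ix p)
  = \sum_(ix : r.+1.-tuple 'I_N) T ix x * (Q (tnth ix ord_max) x * mex v ix ord_max).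
  move=> p; set tau := tperm p ord_max.
  rewrite (reindex_inj (can_inj (ptupK tau))) /=; apply: eq_bigr => ix _.
  rewrite Hs tnth_mktuple tpermL; congr (_ * (_ * _)).
  rewrite /mex (reindex_inj (@perm_inj _ tau)) /=.
  apply: eq_big => q; last by move=> _; rewrite tnth_mktuple tpermK.
  by rewrite -[X in _ != X](tpermR p ord_max) -/tau (inj_eq (@perm_inj _ tau)).
under eq_bigr do rewrite mulr_sumr.
rewrite exchange_big /= (eq_bigr _ (fun p _ => E p)) sumr_const card_ord -[in LHS]mulr_natl.
congr (_ * _).
rewrite (sum_rcons_t (fun ix => T ix x * (Q (tnth ix ord_max) x * mex v ix ord_max))) /fullcontr.
apply: eq_bigr => ix _; rewrite /contrQ mulr_suml; apply: eq_bigr => c _.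
rewrite tnth_rcons_max mex_rcons_max -/(mono v ix); ring.
Qed.
End QT.
Section PathD.
Variables (R : realType) (N : nat).
Local Notation pt := 'rV[R]_N.

Lemma isd_fullcontr (T : tensor R N) r (q : R -> pt) t :
  derivable q t 1 -> derivable (fun u => 'D_1 q u) t 1 ->
  (forall ix : r.-tuple 'I_N, differentiable (T ix) (q t)) ->
  is_derive t 1 (fun u => fullcontr r T (q u) ('D_1 q u))
   (\sum_(ix : r.-tuple 'I_N) ((\sum_(i < N) ('D_1 q t) ord0 i * pd (T ix) i (q t)) * mono ('D_1 q t) ix
        + T ix (q t) * \sum_(p < r) ('D_1 (fun u => 'D_1 q u) t) ord0 (tnth ix p) * mex ('D_1 q t) ix p)).
Proof.
move=> hq hV hT; rewrite /fullcontr; apply: isd_sum => ix _.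
apply: isd_mul; first exact: isd_comp.
have -> : (fun u => \prod_(i <- ix) ('D_1 q u) ord0 i) = (fun u => \prod_(p < r) ('D_1 q u) ord0 (tnth ix p)).
  by apply/funext => u; rewrite big_tuple.
apply: (isd_prod (h := fun p u => ('D_1 q u) ord0 (tnth ix p))) => p.
exact: isd_coord.
Qed.

Lemma isd_fullcontr_sol gamma Q U ta tb (q : R -> pt) t (T : tensor R N) r :
  is_solution gamma Q U ta tb q -> ta < t < tb ->
  (forall ix : r.+1.-tuple 'I_N, differentiable (T ix) (q t)) -> tsym T r.+1 (q t) ->
  is_derive t 1 (fun u => fullcontr r.+1 T (q u) ('D_1 q u))
    (fullcontr r.+2 (nabla gamma T) (q t) ('D_1 q t)
     - r.+1%:R * fullcontr r (contrQ T Q) (q t) ('D_1 q t)).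
Proof.
move=> hs ht hT hsym; have [Ut hq hV hacc] := hs t ht.
apply: (is_derive_eq (isd_fullcontr hq hV hT)).
rewrite -(Qterm Q ('D_1 q t) hsym) -Dval_nabla.
apply: eq_bigr => ix _; congr (_ + _ * _); apply: eq_bigr => p _.
by rewrite hacc.
Qed.
End PathD.
Section Const.
Variable R : realType.

Lemma cst_of_d0 (f : R -> R) (ta tb : R) :
  (forall t : R, ta < t < tb -> is_derive t 1 f 0) ->
  forall t1 t2, ta < t1 < tb -> ta < t2 < tb -> f t1 = f t2.
Proof.
move=> H.
have key t1 t2 : t1 <= t2 -> ta < t1 < tb -> ta < t2 < tb -> f t1 = f t2.
  move=> le12 /andP[a1 b1] /andP[a2 b2].
  have inI x : t1 <= x <= t2 -> ta < x < tb.
    by case/andP => h1 h2; apply/andP; split; [exact: lt_le_trans h1 | exact: le_lt_trans b2].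
  have HD : forall x, x \in `]t1, t2[ -> is_derive x 1 f ((fun _ => 0) x).
    move=> x; rewrite in_itv /= => /andP[h1 h2]; apply: H; apply: inI.
    by rewrite !ltW.
  have HC : {within `[t1, t2], continuous f}.
    apply: continuous_in_subspaceT => x; rewrite inE /= in_itv /= => /inI /H hx.
    apply: differentiable_continuous; apply/derivable1_diffP.
    by case: hx.
  have [c _ E] := @MVT_segment R f (fun _ => 0) t1 t2 le12 HD HC.
  by move/eqP: E; rewrite mul0r subr_eq0 => /eqP.
move=> t1 t2 h1 h2; case: (leP t1 t2) => [le|/ltW le]; first exact: key.
by apply/esym/key.
Qed.
End Const.
Lemma near_eq_differentiable (R : realType) (V W : normedModType R) (f g : V -> W) x :
  (\forall y \near x, f y = g y) -> differentiable g x -> differentiable f x.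
Proof.
move=> fg dg.
have fxgx : f x = g x := nbhs_singleton fg.
have hf : f \o shift x = cst (f x) + 'd g x +o_ 0 id.
  apply/eqaddoP => eps e0.
  have /eqaddoP hg := diff_locally dg.
  have := hg eps e0.
  have fg0 : \forall h \near (0:V), f (h + x) = g (h + x).
    rewrite (near_shift x) /=. near=> y. rewrite /= sub0r addrNK. near: y. exact: fg.
  move=> H; near=> h.
  have -> : (f \o shift x - (cst (f x) + 'd g x)) h = (g \o shift x - (cst (g x) + 'd g x)) h.
    rewrite /= fxgx. change (f (h + x) - (g x + 'd g x h) = g (h + x) - (g x + 'd g x h)). by rewrite (near fg0 h).
  by near: h.
have e := diff_unique (diff_continuous dg) hf.
by apply/diff_locallyP; rewrite e; split => //; exact: diff_continuous.
Unshelve. all: by end_near. Qed.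

Section Diff.
Variables (R : realType) (N : nat).
Local Notation pt := 'rV[R]_N.
Implicit Types (f g : pt -> R) (x : pt).

Lemma dcst (c : R) x : differentiable (fun _ : pt => c) x.
Proof. exact: differentiable_cst. Qed.
Lemma dmul f g x : differentiable f x -> differentiable g x -> differentiable (fun y => f y * g y) x.
Proof. by move=> hf hg; apply: differentiableM. Qed.
Lemma dadd f g x : differentiable f x -> differentiable g x -> differentiable (fun y => f y + g y) x.
Proof. by move=> hf hg; apply: differentiableD. Qed.
Lemma dsub f g x : differentiable f x -> differentiable g x -> differentiable (fun y => f y - g y) x.
Proof. by move=> hf hg; apply: differentiableB. Qed.
Lemma dinv f x : differentiable f x -> f x != 0 -> differentiable (fun y => (f y)^-1) x.
Proof. by move=> hf hx; apply: differentiableV. Qed.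

Lemma dsum (I : Type) (s : seq I) (P : pred I) (F : I -> pt -> R) x :
  (forall i, P i -> differentiable (F i) x) -> differentiable (fun y => \sum_(i <- s | P i) F i y) x.
Proof.
move=> H; elim: s => [|a s IH].
  have -> : (fun y => \sum_(i <- [::] | P i) F i y) = (fun _ => 0) by apply/funext => y; rewrite big_nil.
  exact: dcst.
case Pa: (P a).
  have -> : (fun y => \sum_(i <- a :: s | P i) F i y) = (fun y => F a y + \sum_(i <- s | P i) F i y).
    by apply/funext => y; rewrite big_cons Pa.
  by apply: dadd => //; exact: H.
have -> : (fun y => \sum_(i <- a :: s | P i) F i y) = (fun y => \sum_(i <- s | P i) F i y).
  by apply/funext => y; rewrite big_cons Pa.
exact: IH.
Qed.

Lemma dprod (I : Type) (s : seq I) (P : pred I) (F : I -> pt -> R) x :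
  (forall i, P i -> differentiable (F i) x) -> differentiable (fun y => \prod_(i <- s | P i) F i y) x.
Proof.
move=> H; elim: s => [|a s IH].
  have -> : (fun y => \prod_(i <- [::] | P i) F i y) = (fun _ => 1) by apply/funext => y; rewrite big_nil.
  exact: dcst.
case Pa: (P a).
  have -> : (fun y => \prod_(i <- a :: s | P i) F i y) = (fun y => F a y * \prod_(i <- s | P i) F i y).
    by apply/funext => y; rewrite big_cons Pa.
  by apply: dmul => //; exact: H.
have -> : (fun y => \prod_(i <- a :: s | P i) F i y) = (fun y => \prod_(i <- s | P i) F i y).
  by apply/funext => y; rewrite big_cons Pa.
exact: IH.
Qed.

Lemma ddet n (M : pt -> 'M[R]_n) x :
  (forall i j, differentiable (fun y => M y i j) x) -> differentiable (fun y => \det (M y)) x.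
Proof.
move=> H.
have -> : (fun y => \det (M y)) = (fun y => \sum_(s : 'S_n) (-1) ^+ s * \prod_i M y i (s i)).
  by apply/funext => y.
apply: dsum => s _; apply: dmul; first exact: dcst.
by apply: dprod => i _; apply: H.
Qed.

Lemma smooth_diff (U : set pt) f x : smooth U f -> U x -> differentiable f x.
Proof. by move=> H Ux; exact: ((H 1%N).1 x Ux). Qed.
Lemma smooth_pd_diff (U : set pt) f i x : smooth U f -> U x -> differentiable (pd f i) x.
Proof. by move=> H Ux; exact: (((H 2%N).2 i).1 x Ux). Qed.

Variable gamma : 'I_N -> 'I_N -> pt -> R.

Lemma dginv (U : set pt) x a d : open U -> (forall a b, smooth U (gamma a b)) ->
  (forall y, U y -> \det (gmat gamma y) != 0) -> U x ->
  differentiable (fun y => ginv gamma y a d) x.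
Proof.
move=> oU sg hdet Ux.
have nU : \forall y \near x, U y by apply: open_nbhs_nbhs; split.
apply: (@near_eq_differentiable _ _ _ _
  (fun y => (\det (gmat gamma y))^-1 * ((-1) ^+ (d + a) * \det (row' d (col' a (gmat gamma y)))))).
  near=> y.
  have Uy : U y by near: y.
  by rewrite /ginv /invmx unitmxE unitfE (hdet y Uy) !mxE /cofactor.
apply: dmul; first apply: dinv.
- by apply: ddet => i j; rewrite /gmat; under eq_fun do rewrite mxE; exact: smooth_diff.
- exact: hdet.
apply: dmul; first exact: dcst.
by apply: ddet => i j; under eq_fun do rewrite !mxE; exact: smooth_diff.
Unshelve. all: by end_near. Qed.

Lemma dChr (U : set pt) x a b c : open U -> (forall a b, smooth U (gamma a b)) ->
  (forall y, U y -> \det (gmat gamma y) != 0) -> U x ->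
  differentiable (Christoffel gamma a b c) x.
Proof.
move=> oU sg hdet Ux; rewrite /Christoffel.
apply: dmul; first exact: dcst.
apply: dsum => e _; apply: dmul; first exact: (dginv _ _ oU sg hdet Ux).
by apply: dsub; [apply: dadd|]; exact: smooth_pd_diff.
Qed.
End Diff.
Section DiffT.
Variables (R : realType) (N : nat).
Local Notation pt := 'rV[R]_N.
Variable gamma : 'I_N -> 'I_N -> pt -> R.

Lemma d_covD (T : tensor R N) (ix : seq 'I_N) j x :
  (forall a b c, differentiable (Christoffel gamma a b c) x) ->
  differentiable (pd (T ix) j) x ->
  (forall ix' : seq 'I_N, size ix' = size ix -> differentiable (T ix') x) ->
  differentiable (covD gamma T ix j) x.
Proof.
move=> hC hp hT; rewrite /covD; apply: dsub => //.
apply: dsum => p _; apply: dsum => c _; apply: dmul; first exact: hC.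
apply: hT; rewrite size_set_nth; apply/maxn_idPr; exact: ltn_ord.
Qed.

Lemma d_nabla (T : tensor R N) r (js : seq 'I_N) x : size js = r.+1 ->
  (forall a b c, differentiable (Christoffel gamma a b c) x) ->
  (forall ix : seq 'I_N, size ix = r -> differentiable (T ix) x /\ forall j, differentiable (pd (T ix) j) x) ->
  differentiable (nabla gamma T js) x.
Proof.
move=> hs hC hT; rewrite /nabla; case: js hs => [//|j0 t] /= [hs].
have hb : size (belast j0 t) = r by rewrite size_belast.
apply: d_covD => //; first by case: (hT _ hb).
by move=> ix' hix; case: (hT ix'); rewrite // hix.
Qed.

Lemma d_sym_nabla (T : tensor R N) r (js : seq 'I_N) x : size js = r.+1 ->
  (forall a b c, differentiable (Christoffel gamma a b c) x) ->
  (forall ix : seq 'I_N, size ix = r -> differentiable (T ix) x /\ forall j, differentiable (pd (T ix) j) x) ->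
  differentiable (sym (nabla gamma T) js) x.
Proof.
move=> hs hC hT; rewrite /sym; apply: dmul; first exact: dcst.
apply: dsum => s _; apply: (d_nabla (r := r)) => //.
by rewrite size_map size_enum_ord.
Qed.
End DiffT.
Section FC.
Variables (R : realType) (N : nat).
Local Notation pt := 'rV[R]_N.

Lemma isd_sum_in (I : eqType) (s : seq I) (P : pred I) (F : I -> R -> R) (dF : I -> R) (t : R) :
  (forall i, i \in s -> P i -> is_derive t 1 (F i) (dF i)) ->
  is_derive t 1 (fun u => \sum_(i <- s | P i) F i u) (\sum_(i <- s | P i) dF i).
Proof.
move=> H.
have -> : (fun u => \sum_(i <- s | P i) F i u) = (fun u => \sum_(i <- s | (i \in s) && P i) F i u).
  by apply/funext => u; rewrite big_seq_cond.
rewrite big_seq_cond; apply: isd_sum => i /andP[]; exact: H.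
Qed.

Lemma fc_ext (T1 T2 : tensor R N) r (x v : pt) :
  (forall ix : seq 'I_N, size ix = r -> T1 ix x = T2 ix x) ->
  fullcontr r T1 x v = fullcontr r T2 x v.
Proof. by move=> H; apply: eq_bigr => ix _; rewrite H // size_tuple. Qed.

Lemma fc_comb (A B : tensor R N) (al be : R) r (x v : pt) :
  fullcontr r (fun ix y => al * A ix y - be * B ix y) x v
  = al * fullcontr r A x v - be * fullcontr r B x v.
Proof. by rewrite /fullcontr !mulr_sumr -sumrB; apply: eq_bigr => ix _; ring. Qed.

Lemma fc_comb1 (A B : tensor R N) (al : R) r (x v : pt) :
  fullcontr r (fun ix y => al * A ix y - B ix y) x v
  = al * fullcontr r A x v - fullcontr r B x v.
Proof. by rewrite /fullcontr !mulr_sumr -sumrB; apply: eq_bigr => ix _; ring. Qed.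

Lemma fc_scale (A : tensor R N) (al : R) r (x v : pt) :
  fullcontr r (fun ix y => al * A ix y) x v = al * fullcontr r A x v.
Proof. by rewrite /fullcontr !mulr_sumr; apply: eq_bigr => ix _; ring. Qed.

Lemma fc_lin (A : tensor R N) (I : Type) (s : seq I) (P : pred I) (c : I -> R) (B : I -> tensor R N) r (x v : pt) :
  fullcontr r (fun ix y => A ix y - \sum_(k <- s | P k) c k * B k ix y) x v
  = fullcontr r A x v - \sum_(k <- s | P k) c k * fullcontr r (B k) x v.
Proof.
rewrite /fullcontr.
under [X in _ = _ - X]eq_bigr do rewrite mulr_sumr.
rewrite [X in _ = _ - X]exchange_big -sumrB /=; apply: eq_bigr => ix _.
by rewrite mulrBl mulr_suml; congr (_ - _); apply: eq_bigr => k _; ring.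
Qed.

Lemma fc_zero (A : tensor R N) r (x v : pt) :
  (forall ix : seq 'I_N, size ix = r -> A ix x = 0) -> fullcontr r A x v = 0.
Proof. by move=> H; rewrite /fullcontr big1 // => ix _; rewrite H ?mul0r // size_tuple. Qed.

Lemma sum_tuple0 (F : 0.-tuple 'I_N -> R) : \sum_(ix : 0.-tuple 'I_N) F ix = F [tuple].
Proof. by rewrite (big_pred1 [tuple]) // => ix; apply/esym/eqP; exact: tuple0. Qed.

Lemma fc0 (A : tensor R N) (x v : pt) : fullcontr 0 A x v = A [::] x.
Proof. by rewrite /fullcontr sum_tuple0 /= big_nil mulr1. Qed.

Lemma fc1 (A : tensor R N) (x v : pt) : fullcontr 1 A x v = \sum_(i < N) v ord0 i * A [:: i] x.
Proof.
rewrite /fullcontr (sum_rcons 0 (fun s => A s x * \prod_(i <- s) v ord0 i)) sum_tuple0 /=.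
by apply: eq_bigr => i _; rewrite big_cons big_nil mulr1 mulrC.
Qed.
End FC.

Section Alg.
Variable R : realFieldType.

Lemma natr_nz (k : nat) : k.+1%:R != 0 :> R.
Proof. by rewrite pnatr_eq0. Qed.
Lemma natr_nz' (k : nat) : 1 + k%:R != 0 :> R.
Proof. by rewrite addrC natr1 pnatr_eq0. Qed.

Lemma alg (m n : nat) (t s f dG : R) (a b c : nat -> nat -> R) (e d : nat -> R) :
 (3 <= m)%N -> (1 <= n)%N ->
 b n m = 0 ->
 b n (m-1)%N = - (m%:R / n%:R) * e n.-1 ->
 (forall k, (2 <= k <= n)%N -> b k.-1 (m-1)%N = - (m%:R / (k-1)%:R) * e (k-2)%N - k%:R * a k (m-1)%N) ->
 b 0%N (m-1)%N = m%:R * f - a 1%N (m-1)%N ->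
 (forall r, (2 <= r <= m-2)%N -> b n r = r.+1%:R * c n r) ->
 (forall k r, (1 <= k <= n)%N -> (2 <= r <= m-2)%N -> b k.-1 r = r.+1%:R * c k.-1 r - k%:R * a k r) ->
 d n.-1 = (2*n)%:R * c n 1%N ->
 (forall k, (2 <= k <= n)%N -> d (k-2)%N = (2*(k-1))%:R * c k.-1 1%N - (k*(k-1))%:R * a k 1%N) ->
 dG = 2 * c 0%N 1%N - a 1%N 1%N ->
 c n 0%N = s ->
 - (m%:R * f)
 - \sum_(1 <= k < n.+1) (t ^+ k.-1 * b k.-1 m - t ^+ k / k%:R * (m%:R * e k.-1))
 + \sum_(1 <= r < m) \sum_(0 <= k < n.+1) (k%:R * t ^+ k.-1 * a k r + t ^+ k * (b k r.+1 - r%:R * c k r.-1))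
 + s * t ^+ n
 + \sum_(1 <= k < n.+1) (t ^+ k.-1 * c k.-1 0%N + t ^+ k / k%:R * d k.-1)
 + dG = 0.
Proof.
case: m => [|[|[|m']]] // _; case: n => [|n'] // _.
move=> hbm htop hk h0 hnr hkr hdn hdk hG hs.
rewrite !subSS !subn0 /= in htop h0 hk hnr hkr hdn.
pose al r := \sum_(0 <= k < n'.+2) k%:R * t ^+ k.-1 * a k r.
pose be r := \sum_(0 <= k < n'.+2) t ^+ k * b k r.
pose ga r := \sum_(0 <= k < n'.+2) t ^+ k * c k r.
have HB : \sum_(1 <= r < m'.+3) \sum_(0 <= k < n'.+2) (k%:R * t ^+ k.-1 * a k r + t ^+ k * (b k r.+1 - r%:R * c k r.-1))
   = al 1%N + \sum_(2 <= r < m'.+2) (al r + be r - r.+1%:R * ga r) + al m'.+2 + be m'.+2 + be m'.+3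
     - ga 0%N - 2 * ga 1%N.
  have E1 r : \sum_(0 <= k < n'.+2) (k%:R * t ^+ k.-1 * a k r + t ^+ k * (b k r.+1 - r%:R * c k r.-1))
      = al r + be r.+1 - r%:R * ga r.-1.
    by rewrite /al /be /ga mulr_sumr -big_split -sumrB /=; apply: eq_bigr => k _; ring.
  rewrite (eq_bigr _ (fun r _ => E1 r)) sumrB big_split /=.
  have Sa : \sum_(1 <= r < m'.+3) al r = al 1%N + \sum_(2 <= r < m'.+2) al r + al m'.+2.
    by rewrite big_ltn // big_nat_recr //= addrA.
  have Sb : \sum_(1 <= r < m'.+3) be r.+1 = \sum_(2 <= r < m'.+2) be r + be m'.+2 + be m'.+3.
    have -> : \sum_(1 <= r < m'.+3) be r.+1 = \sum_(2 <= r < m'.+4) be r by rewrite [RHS]big_add1.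
    by rewrite big_nat_recr //= big_nat_recr.
  have Sg : \sum_(1 <= r < m'.+3) r%:R * ga r.-1 = ga 0%N + 2 * ga 1%N + \sum_(2 <= r < m'.+2) r.+1%:R * ga r.
    rewrite big_add1 /= big_ltn // big_ltn //= mul1r addrA.
    done.
  rewrite Sa Sb Sg sumrB big_split /=; ring.
have alE r : al r = \sum_(0 <= k < n'.+1) k.+1%:R * t ^+ k * a k.+1 r.
  by rewrite /al big_nat_recl //= mul0r mul0r add0r.
have beE r : be r = \sum_(0 <= k < n'.+1) t ^+ k * b k r + t ^+ n'.+1 * b n'.+1 r.
  by rewrite /be big_nat_recr.
have gaE r : ga r = \sum_(0 <= k < n'.+1) t ^+ k * c k r + t ^+ n'.+1 * c n'.+1 r.
  by rewrite /ga big_nat_recr.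
have Mid : \sum_(2 <= r < m'.+2) (al r + be r - r.+1%:R * ga r) = 0.
  rewrite big_nat_cond big1 // => r /andP[/andP[r2 rm] _].
  have Z : \sum_(0 <= k < n'.+1) (k.+1%:R * t ^+ k * a k.+1 r + t ^+ k * b k r - r.+1%:R * (t ^+ k * c k r)) = 0.
    rewrite big_nat_cond big1 // => k /andP[/andP[_ kn] _].
    move: (hkr k.+1 r) => /= -> //; [ring | lia].
  rewrite !big_split /= sumrN -mulr_sumr in Z.
  rewrite alE beE gaE hnr; last by lia.
  by rewrite -[RHS]Z; ring.
have F2 : be m'.+3 = \sum_(1 <= k < n'.+2) t ^+ k.-1 * b k.-1 m'.+3.
  by rewrite beE hbm mulr0 addr0 big_add1.
have F4 : ga 0%N = \sum_(1 <= k < n'.+2) t ^+ k.-1 * c k.-1 0%N + s * t ^+ n'.+1.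
  by rewrite gaE hs big_add1 mulrC.
have sA M : \sum_(0 <= k < n'.+1) k.+1%:R * t ^+ k * a k.+1 M
    = a 1%N M + \sum_(0 <= k < n') k.+2%:R * t ^+ k.+1 * a k.+2 M.
  by rewrite big_nat_recl //= expr0 !mul1r.
have sB (F : nat -> R) : \sum_(0 <= k < n'.+1) t ^+ k * F k = F 0%N + \sum_(0 <= k < n') t ^+ k.+1 * F k.+1.
  by rewrite big_nat_recl //= expr0 mul1r.
have sE (F : nat -> R) : \sum_(1 <= k < n'.+2) t ^+ k / k%:R * F k.-1
    = \sum_(0 <= k < n') t ^+ k.+1 / k.+1%:R * F k + t ^+ n'.+1 / n'.+1%:R * F n'.
  by rewrite big_add1 big_nat_recr.
have F1 : al m'.+2 = m'.+3%:R * f - \sum_(1 <= k < n'.+2) t ^+ k / k%:R * (m'.+3%:R * e k.-1) - be m'.+2.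
  rewrite alE beE htop sA sB (sE (fun k => m'.+3%:R * e k)) h0.
  have Z : \sum_(0 <= k < n') (k.+2%:R * t ^+ k.+1 * a k.+2 m'.+2 + t ^+ k.+1 * b k.+1 m'.+2
                + t ^+ k.+1 / k.+1%:R * (m'.+3%:R * e k)) = 0.
    rewrite big_nat_cond big1 // => k /andP[/andP[_ kn] _].
    move: (hk k.+2) => /=; rewrite !subSS !subn0 => -> //; ring.
  rewrite !big_split /= in Z.
  apply/eqP; rewrite -subr_eq0; apply/eqP; rewrite -[X in _ = X]Z; ring.
have F3 : dG = 2 * ga 1%N - al 1%N - \sum_(1 <= k < n'.+2) t ^+ k / k%:R * d k.-1.
  rewrite gaE alE hG sA (sB (fun k => c k 1%N)) (sE d) hdn.
  have Z : \sum_(0 <= k < n') (t ^+ k.+1 / k.+1%:R * d k - 2 * (t ^+ k.+1 * c k.+1 1%N)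
                + k.+2%:R * t ^+ k.+1 * a k.+2 1%N) = 0.
    rewrite big_nat_cond big1 // => k /andP[/andP[_ kn] _].
    move: (hdk k.+2) => /=; rewrite !subSS !subn0 => -> //.
    by field; rewrite natr_nz'.
  rewrite !big_split /= sumrN -mulr_sumr in Z.
  apply/eqP; rewrite -subr_eq0; apply/eqP; rewrite -[X in _ = X]Z; field; rewrite ?natr_nz ?natr_nz' //.
rewrite HB Mid addr0 sumrB big_split /= F2 F4 F1 F3; ring.
Qed.
End Alg.
Lemma isd_ext (R : realType) (f g : R -> R) (t d : R) :
  (forall u, f u = g u) -> is_derive t 1 g d -> is_derive t 1 f d.
Proof. by move=> H; have -> : f = g by apply/funext. Qed.

Lemma isd_powc (R : realType) (t c : R) (k : nat) :
  is_derive t 1 (fun u : R => u ^+ k / c) (k%:R * t ^+ k.-1 / c).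
Proof.
apply: (is_derive_eq (isd_mul (isd_pow t k) (isd_cst t c^-1))).
by rewrite mulr0 addr0.
Qed.

Theorem theorem1 (R : realType) (N : nat) (U : set 'rV[R]_N)
  (gamma : 'I_N -> 'I_N -> 'rV[R]_N -> R) (Q : 'I_N -> 'rV[R]_N -> R)
  (m n : nat) (s : R) (G : 'rV[R]_N -> R)
  (C : tensor R N) (L : nat -> tensor R N) :
  open U ->
  (* smooth pseudo-Riemannian metric and smooth force field on the chart U *)
  (forall a b, smooth U (gamma a b)) ->
  (forall a b x, U x -> gamma a b x = gamma b a x) ->
  (forall x, U x -> \det (gmat gamma x) != 0) ->
  (forall a, smooth U (Q a)) ->
  (3 <= m)%N -> (1 <= n)%N ->
  smooth U G ->
  (forall ix : seq 'I_N, size ix = m -> smooth U (C ix)) ->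
  (forall k (ix : seq 'I_N), (k <= n)%N -> (1 <= size ix <= m - 1)%N -> smooth U (L k ix)) ->
  (* C_(0) is an m-th order Killing tensor *)
  Killing gamma U m C ->
  (* the L_(k) are totally symmetric of every rank r = 1 .. m-1 *)
  (forall k r, (k <= n)%N -> (1 <= r <= m - 1)%N -> totally_symmetric U r (L k)) ->
  (* (i) *)
  (forall k, (k < n)%N -> Killing gamma U m (sym (nabla gamma (L k)))) ->
  Killing gamma U (m - 1) (L n) ->
  (* (ii) *)
  (forall x, U x -> contrQ (L n) Q [::] x = s) ->
  (* (iii) *)
  (forall x, U x -> forall ix : seq 'I_N, size ix = (m - 1)%N ->
     sym (nabla gamma (L n)) ix x
       = - (m%:R / n%:R) * contrQ (sym (nabla gamma (L n.-1))) Q ix x) ->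
  (forall k, (2 <= k <= n)%N -> forall x, U x -> forall ix : seq 'I_N, size ix = (m - 1)%N ->
     sym (nabla gamma (L k.-1)) ix x
       = - (m%:R / (k - 1)%:R) * contrQ (sym (nabla gamma (L (k - 2)%N))) Q ix x
         - k%:R * L k ix x) ->
  (forall x, U x -> forall ix : seq 'I_N, size ix = (m - 1)%N ->
     sym (nabla gamma (L 0%N)) ix x = m%:R * contrQ C Q ix x - L 1%N ix x) ->
  (forall r, (2 <= r <= m - 2)%N -> forall x, U x -> forall ix : seq 'I_N, size ix = r ->
     sym (nabla gamma (L n)) ix x = r.+1%:R * contrQ (L n) Q ix x) ->
  (forall k r, (1 <= k <= n)%N -> (2 <= r <= m - 2)%N ->
     forall x, U x -> forall ix : seq 'I_N, size ix = r ->
     sym (nabla gamma (L k.-1)) ix x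
       = r.+1%:R * contrQ (L k.-1) Q ix x - k%:R * L k ix x) ->
  (forall x, U x -> forall i : 'I_N,
     pd (contrQ (L n.-1) Q [::]) i x = (2 * n)%:R * contrQ (L n) Q [:: i] x) ->
  (forall k, (2 <= k <= n)%N -> forall x, U x -> forall i : 'I_N,
     pd (contrQ (L (k - 2)%N) Q [::]) i x
       = (2 * (k - 1))%:R * contrQ (L k.-1) Q [:: i] x - (k * (k - 1))%:R * L k [:: i] x) ->
  (forall x, U x -> forall i : 'I_N,
     pd G i x = 2 * contrQ (L 0%N) Q [:: i] x - L 1%N [:: i] x) ->
  (* conclusion: I^(m)_n is a first integral *)
  first_integral gamma Q U (fun t x v =>
      fullcontr m (fun ix y => C ix y
          - \sum_(1 <= k < n.+1) t ^+ k / k%:R * sym (nabla gamma (L k.-1)) ix y) x v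
    + \sum_(1 <= r < m) \sum_(0 <= k < n.+1) t ^+ k * fullcontr r (L k) x v
    + s * t ^+ n.+1 / n.+1%:R
    + \sum_(1 <= k < n.+1) t ^+ k / k%:R * contrQ (L k.-1) Q [::] x
    + G x).
Proof.
move=> oU sg gsym hdet sQ hm hn sG sC sL KC symL KS KLn hsv h1 h2 h3 h4 h5 h6 h7 h8.
have [m' Em] : exists m', m = m'.+3 by exists (m - 3)%N; lia.
subst m.
move=> ta tb q hsol; apply: cst_of_d0 => t ht.
have [Ut hq hV hacc] := hsol t ht.
have E1 : (m'.+3 - 1 = m'.+2)%N by [].
have E2 : (m'.+3 - 2 = m'.+1)%N by [].
rewrite E1 in sL symL KLn h1 h2 h3; rewrite E2 in h4 h5.
have dCh : forall a b c, differentiable (Christoffel gamma a b c) (q t).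
  by move=> a b c; exact: (dChr a b c oU sg hdet Ut).
have dLs : forall k (ix : seq 'I_N), (k <= n)%N -> (1 <= size ix <= m'.+2)%N ->
    differentiable (L k ix) (q t) /\ forall j, differentiable (pd (L k ix) j) (q t).
  move=> k ix hk hix; split; [exact: (smooth_diff (sL k ix hk hix) Ut)|].
  by move=> j; exact: (smooth_pd_diff j (sL k ix hk hix) Ut).
have dS : forall k (ix : m'.+3.-tuple 'I_N), (k <= n)%N ->
    differentiable (sym (nabla gamma (L k)) ix) (q t).
  move=> k ix hk; apply: (d_sym_nabla (r := m'.+2)); rewrite ?size_tuple //.
  move=> ix' hix'; apply: dLs; first exact: hk.
  by rewrite hix' leqnn.
have dCt : forall ix : m'.+3.-tuple 'I_N, differentiable (C ix) (q t).
  by move=> ix; exact: (smooth_diff (sC ix (size_tuple ix)) Ut).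
have dLt : forall k r (ix : r.-tuple 'I_N), (k <= n)%N -> (1 <= r <= m'.+2)%N ->
    differentiable (L k ix) (q t).
  by move=> k r ix hk hr; case: (dLs k ix hk); rewrite ?size_tuple.
have dh : forall k, (k <= n)%N -> differentiable (contrQ (L k) Q [::]) (q t).
  move=> k hk; rewrite /contrQ; apply: dsum => c _; apply: dmul.
    by case: (dLs k [:: c] hk).
  exact: (smooth_diff (sQ c) Ut).
pose a := fun k r => fullcontr r (L k) (q t) ('D_1 q t).
pose b := fun k r => fullcontr r (nabla gamma (L k)) (q t) ('D_1 q t).
pose c := fun k r => fullcontr r (contrQ (L k) Q) (q t) ('D_1 q t).
pose e := fun k => fullcontr m'.+2 (contrQ (sym (nabla gamma (L k))) Q) (q t) ('D_1 q t).
pose f := fullcontr m'.+2 (contrQ C Q) (q t) ('D_1 q t).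
pose d := fun k => \sum_(i < N) ('D_1 q t) ord0 i * pd (contrQ (L k) Q [::]) i (q t).
pose dG := \sum_(i < N) ('D_1 q t) ord0 i * pd G i (q t).
have HA : is_derive t 1 (fun u => fullcontr m'.+3 C (q u) ('D_1 q u)
     - \sum_(1 <= k < n.+1) u ^+ k / k%:R * fullcontr m'.+3 (sym (nabla gamma (L k.-1))) (q u) ('D_1 q u))
   (- (m'.+3%:R * f) - \sum_(1 <= k < n.+1) (t ^+ k.-1 * b k.-1 m'.+3 - t ^+ k / k%:R * (m'.+3%:R * e k.-1))).
  apply: isd_sub.
    apply: (is_derive_eq (isd_fullcontr_sol hsol ht dCt (tsym_totsym KC.1 Ut))).
    have -> : fullcontr m'.+4 (nabla gamma C) (q t) ('D_1 q t) = 0.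
      rewrite -fullcontr_sym; apply: fc_zero => ix hix; exact: (KC.2 _ Ut ix hix).
    by rewrite sub0r.
  apply: isd_sum_in => k; rewrite mem_index_iota => /andP[k1 kn] _.
  case: k k1 kn => // k _ kn.
  have hkn : (k <= n)%N by apply: ltnW.
  apply: (is_derive_eq (isd_mul (isd_powc t k.+1%:R k.+1)
     (isd_fullcontr_sol hsol ht (fun ix => dS k ix hkn) (@tsym_sym _ _ _ _ _)))).
  have -> : fullcontr m'.+4 (nabla gamma (sym (nabla gamma (L k)))) (q t) ('D_1 q t) = 0.
    rewrite -fullcontr_sym; apply: fc_zero => ix hix; exact: ((KS k kn).2 _ Ut ix hix).
  rewrite fullcontr_sym /= /b /e.
  by field; rewrite ?natr_nz ?natr_nz'.
have HB : is_derive t 1 (fun u => \sum_(1 <= r < m'.+3) \sum_(0 <= k < n.+1) u ^+ k * fullcontr r (L k) (q u) ('D_1 q u))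
   (\sum_(1 <= r < m'.+3) \sum_(0 <= k < n.+1) (k%:R * t ^+ k.-1 * a k r + t ^+ k * (b k r.+1 - r%:R * c k r.-1))).
  apply: isd_sum_in => r; rewrite mem_index_iota => /andP[r1 rm] _.
  apply: isd_sum_in => k; rewrite mem_index_iota => /andP[_ kn] _.
  case: r r1 rm => // r _ rm.
  have hkn : (k <= n)%N by [].
  have hr : (1 <= r.+1 <= m'.+2)%N by [].
  exact: (is_derive_eq (isd_mul (isd_pow t k)
     (isd_fullcontr_sol hsol ht (fun ix => dLt k r.+1 ix hkn hr) (tsym_totsym (symL k r.+1 hkn hr) Ut)))).
have HS : is_derive t 1 (fun u => s * u ^+ n.+1 / n.+1%:R) (s * t ^+ n).
  apply: (is_derive_eq (isd_mul (isd_mul (isd_cst t s) (isd_pow t n.+1)) (isd_cst t (n.+1%:R)^-1))).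
  by rewrite /=; field; rewrite ?natr_nz ?natr_nz'.
have HC : is_derive t 1 (fun u => \sum_(1 <= k < n.+1) u ^+ k / k%:R * contrQ (L k.-1) Q [::] (q u))
   (\sum_(1 <= k < n.+1) (t ^+ k.-1 * c k.-1 0%N + t ^+ k / k%:R * d k.-1)).
  apply: isd_sum_in => k; rewrite mem_index_iota => /andP[k1 kn] _.
  case: k k1 kn => // k _ kn.
  have hkn : (k <= n)%N by apply: ltnW.
  apply: (is_derive_eq (isd_mul (isd_powc t k.+1%:R k.+1) (isd_comp hq (dh k hkn)))).
  rewrite /c /d fc0 /=.
  by field; rewrite ?natr_nz ?natr_nz'.
have HG : is_derive t 1 (fun u => G (q u)) dG.
  by apply: isd_comp => //; exact: (smooth_diff sG Ut).
apply: (isd_ext _ (is_derive_eq (isd_add (isd_add (isd_add (isd_add HA HB) HS) HC) HG) _)).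
  by move=> u /=; rewrite fc_lin.
apply: (alg (m := m'.+3) (n := n)) => //.
- rewrite /b -fullcontr_sym; apply: fc_zero => ix hix; exact: (KLn.2 _ Ut ix hix).
- rewrite /b /e ?E1 -fullcontr_sym -fc_scale; apply: fc_ext => ix hix; exact: h1.
- move=> k hk; rewrite /b /e /a ?E1 -fullcontr_sym -fc_comb; apply: fc_ext => ix hix; exact: h2.
- rewrite /b /a /f ?E1 -fullcontr_sym -fc_comb1; apply: fc_ext => ix hix; exact: h3.
- move=> r hr; rewrite /b /c -fullcontr_sym -fc_scale; apply: fc_ext => ix hix; exact: h4.
- move=> k r hk hr; rewrite /b /c /a -fullcontr_sym -fc_comb; apply: fc_ext => ix hix; exact: h5.
- rewrite /d /c fc1 mulr_sumr; apply: eq_bigr => i _; rewrite h6 //; ring.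
- move=> k hk; rewrite /d /c /a !fc1 !mulr_sumr -sumrB; apply: eq_bigr => i _; rewrite h7 //; ring.
- rewrite /dG /c /a !fc1 !mulr_sumr -sumrB; apply: eq_bigr => i _; rewrite h8 //; ring.
- by rewrite /c fc0; exact: hsv.
Qed.
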